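(* Let $p$ be a prime, $n\ge1$, $\zeta=\zeta_{p^n}$ a primitive $p^n$th root of unity, $T=\mathbb{Z}_{(p)}[\zeta]$, $t=1-\zeta$ with valuation $v_t$. Then the tuple $\tau=(1-\zeta^j)_{j\in[0,p^n-1],\,p\nmid j}$, with $j$ in increasing order, is minimally ordered.
   Context: A tuple $(\xi_0,\dots,\xi_{r-1})$ of pairwise distinct elements of $T$ is minimally ordered if $\sum_{i\in[0,j-1]}v_t(\xi_j-\xi_i)\le\sum_{i\in[0,j-1]}v_t(\xi_k-\xi_i)$ for all $j\in[0,r-1]$ and $k\in[j+1,r-1]$. *)

(* Defs.v *)
From HB Require Import structures.
From mathcomp Require Import all_boot all_order all_algebra all_field.
From Stdlib Require Import ClassicalEpsilon.
Set Implicit Arguments. Unset Strict Implicit. Unset Printing Implicit Defensive.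
Import Order.TTheory GRing.Theory Num.Theory.
Local Open Scope ring_scope.

Definition in_Zp_loc (p : nat) (x : algC) : Prop :=
  exists (a : int) (b : nat), ~~ (p %| b)%N /\ x = a%:~R / b%:R.

Definition in_T (p : nat) (zeta x : algC) : Prop :=
  exists q : {poly algC}, (forall i, in_Zp_loc p q`_i) /\ x = q.[zeta].

Definition dvd_T (p : nat) (zeta d x : algC) : Prop :=
  exists y, in_T p zeta y /\ x = d * y.

(* t-adic valuation v_t on T, t = 1 - zeta: the k with t^k | x and not t^(k+1) | x
   (meaningful for nonzero x in T). *)
Definition v_t (p : nat) (zeta x : algC) : nat :=
  epsilon (inhabits 0%N)
    (fun k => dvd_T p zeta ((1 - zeta) ^+ k) x /\
              ~ dvd_T p zeta ((1 - zeta) ^+ k.+1) x).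

Definition minimally_ordered (p : nat) (zeta : algC) (xi : seq algC) : Prop :=
  [/\ uniq xi,
      (forall i, (i < size xi)%N -> in_T p zeta xi`_i) &
      forall j k, (j < k)%N -> (k < size xi)%N ->
        (\sum_(i < j) v_t p zeta (xi`_j - xi`_i)%R <=
         \sum_(i < j) v_t p zeta (xi`_k - xi`_i)%R)%N].

Definition tau (p n : nat) (zeta : algC) : seq algC :=
  [seq 1 - zeta ^+ j | j <- [seq j <- iota 0 (p ^ n) | ~~ (p %| j)%N]].

(* Main.v *)
Require Import Defs.
From mathcomp Require Import all_boot all_order all_algebra all_field.
From Stdlib Require Import ClassicalEpsilon.
From mathcomp Require Import ring zify.
Set Implicit Arguments. Unset Strict Implicit. Unset Printing Implicit Defensive.
Import Order.TTheory GRing.Theory Num.Theory.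
Local Open Scope ring_scope.

Section Zl.
Variable p : nat.
Hypothesis pr : prime p.

Lemma Zl_int (a : int) : in_Zp_loc p a%:~R.
Proof.
exists a, 1%N; split; first by rewrite dvdn1 neq_ltn prime_gt1 ?orbT.
by rewrite divr1.
Qed.

Lemma Zl_nd b : ~~ (p %| b)%N -> b%:R != 0 :> algC.
Proof. by move=> h; rewrite pnatr_eq0; apply: contraNneq h => ->; rewrite dvdn0. Qed.

Lemma Zl_add x y : in_Zp_loc p x -> in_Zp_loc p y -> in_Zp_loc p (x + y).
Proof.
move=> [a [b [hb ->]]] [c [d [hd ->]]].
exists (a * d%:Z + c * b%:Z), (b * d)%N; split.
  by rewrite Euclid_dvdM // negb_or hb hd.
have b0 := Zl_nd hb; have d0 := Zl_nd hd.
rewrite natrM rmorphD !rmorphM /= !pmulrn. field. by rewrite b0 d0.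
Qed.

Lemma Zl_mul x y : in_Zp_loc p x -> in_Zp_loc p y -> in_Zp_loc p (x * y).
Proof.
move=> [a [b [hb ->]]] [c [d [hd ->]]].
exists (a * c), (b * d)%N; split.
  by rewrite Euclid_dvdM // negb_or hb hd.
have b0 := Zl_nd hb; have d0 := Zl_nd hd.
rewrite natrM !rmorphM /=. field. by rewrite b0 d0.
Qed.

Lemma Zl_opp x : in_Zp_loc p x -> in_Zp_loc p (- x).
Proof.
move=> hx; have -> : - x = (-1)%:~R * x by rewrite mulrN1z mulN1r.
by apply: Zl_mul => //; apply: Zl_int.
Qed.

Lemma Zl0 : in_Zp_loc p 0. Proof. by have := Zl_int 0. Qed.
Lemma Zl1 : in_Zp_loc p 1. Proof. by have := Zl_int 1. Qed.

Lemma Zl_sum (I : Type) (r : seq I) (P : pred I) F :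
  (forall i, P i -> in_Zp_loc p (F i)) -> in_Zp_loc p (\sum_(i <- r | P i) F i).
Proof. move=> h; apply: big_ind => //; [exact: Zl0 | exact: Zl_add]. Qed.
End Zl.

Section TT.
Variable p : nat.
Hypothesis pr : prime p.
Variable z : algC.
Local Notation T := (in_T p z).

Lemma T_add x y : T x -> T y -> T (x + y).
Proof.
move=> [q1 [h1 ->]] [q2 [h2 ->]]; exists (q1 + q2); split; last by rewrite hornerD.
by move=> i; rewrite coefD; apply: Zl_add.
Qed.

Lemma T_opp x : T x -> T (- x).
Proof.
move=> [q1 [h1 ->]]; exists (- q1); split; last by rewrite hornerN.
by move=> i; rewrite coefN; apply: Zl_opp.
Qed.

Lemma T_mul x y : T x -> T y -> T (x * y).
Proof.
move=> [q1 [h1 ->]] [q2 [h2 ->]]; exists (q1 * q2); split; last by rewrite hornerM.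
move=> i; rewrite coefM; apply: Zl_sum => // j _; exact: Zl_mul.
Qed.

Lemma T_Zl c : in_Zp_loc p c -> T c.
Proof.
move=> hc; exists c%:P; split; last by rewrite hornerC.
by move=> i; rewrite coefC; case: eqP => _ //; apply: Zl0.
Qed.

Lemma T_int (a : int) : T a%:~R.
Proof. exact/T_Zl/Zl_int. Qed.

Lemma T_nat (a : nat) : T a%:R.
Proof. by have := T_int a; rewrite pmulrn. Qed.

Lemma T0 : T 0. Proof. exact: (T_nat 0). Qed.
Lemma T1 : T 1. Proof. exact: (T_nat 1). Qed.

Lemma T_z : T z.
Proof.
exists 'X; split; last by rewrite hornerX.
by move=> i; rewrite coefX; case: eqP => _; [apply: Zl1 | apply: Zl0].
Qed.

Lemma T_sub x y : T x -> T y -> T (x - y).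
Proof. by move=> hx hy; apply: T_add => //; apply: T_opp. Qed.

Lemma T_exp x k : T x -> T (x ^+ k).
Proof. by move=> hx; elim: k => [|k ih]; [rewrite expr0; apply: T1 | rewrite exprS; apply: T_mul]. Qed.

Lemma T_zexp k : T (z ^+ k). Proof. exact/T_exp/T_z. Qed.

Lemma T_sum (I : Type) (r : seq I) (P : pred I) F :
  (forall i, P i -> T (F i)) -> T (\sum_(i <- r | P i) F i).
Proof. move=> h; apply: big_ind => //; [exact: T0 | exact: T_add]. Qed.

Lemma T_prod (I : Type) (r : seq I) (P : pred I) F :
  (forall i, P i -> T (F i)) -> T (\prod_(i <- r | P i) F i).
Proof. move=> h; apply: big_ind => //; [exact: T1 | exact: T_mul]. Qed.

Definition SS (x : algC) := exists d : nat, ~~ (p %| d)%N /\ d%:R * x \in Aint.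

Lemma SS_T x : z \in Aint -> T x -> SS x.
Proof.
move=> za [q [hq ->]]; rewrite horner_coef.
have hS : forall x y, SS x -> SS y -> SS (x + y).
  move=> x1 y1 [d1 [h1 a1]] [d2 [h2 a2]]; exists (d1 * d2)%N; split.
    by rewrite Euclid_dvdM // negb_or h1 h2.
  have -> : (d1 * d2)%:R * (x1 + y1) = d2%:R * (d1%:R * x1) + d1%:R * (d2%:R * y1).
    by rewrite natrM; ring.
  by rewrite rpredD // rpredM // rpred_nat.
apply: big_ind => //; first by exists 1%N; rewrite mulr0 rpred0 dvdn1 neq_ltn prime_gt1 ?orbT.
move=> i _; have [a [b [hb ->]]] := hq i; exists b; split => //.
rewrite mulrA mulrCA divff ?mulr1.
  by rewrite rpredM ?rpredX ?Aint_int.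
exact: (Zl_nd hb).
Qed.
End TT.


Section Main.
Variables (p n : nat) (zeta : algC).
Hypothesis pr : prime p.
Hypothesis n1 : (1 <= n)%N.
Hypothesis prim : (p ^ n)%N.-primitive_root zeta.
Local Notation T := (in_T p zeta).
Local Notation t := (1 - zeta).

Definition assoc x y := exists U V, T U /\ T V /\ x = y * U /\ y = x * V.

Lemma mk_assoc x y U V : T U -> T V -> x = y * U -> y = x * V -> assoc x y.
Proof. by move=> *; exists U, V. Qed.

Lemma assoc_refl x : assoc x x.
Proof. by apply: (mk_assoc (U:=1) (V:=1) (T1 pr zeta) (T1 pr zeta)); rewrite mulr1. Qed.

Lemma assoc_sym x y : assoc x y -> assoc y x.
Proof. by move=> [U [V [hU [hV [e1 e2]]]]]; exists V, U. Qed.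

Lemma assoc_trans x y w : assoc x y -> assoc y w -> assoc x w.
Proof.
move=> [U [V [hU [hV [e1 e2]]]]] [U' [V' [hU' [hV' [e1' e2']]]]].
apply: (mk_assoc (U:=U' * U) (V:=V * V')); try exact: (T_mul pr).
  by rewrite e1 e1' mulrA.
by rewrite e2' e2 mulrA.
Qed.

Lemma assoc_mul x y x' y' : assoc x y -> assoc x' y' -> assoc (x * x') (y * y').
Proof.
move=> [U [V [hU [hV [e1 e2]]]]] [U' [V' [hU' [hV' [e1' e2']]]]].
apply: (mk_assoc (U:=U * U') (V:=V * V')); try exact: (T_mul pr).
  by rewrite e1 e1'; ring.
by rewrite e2 e2'; ring.
Qed.

Lemma assoc_prod (I : Type) (r : seq I) (P : pred I) F G :
  (forall i, P i -> assoc (F i) (G i)) ->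
  assoc (\prod_(i <- r | P i) F i) (\prod_(i <- r | P i) G i).
Proof.
move=> h; apply: (big_ind2 assoc) => //; [exact: assoc_refl | exact: assoc_mul].
Qed.

Lemma assoc_prod_seq (I : eqType) (r : seq I) F G :
  (forall i, i \in r -> assoc (F i) (G i)) ->
  assoc (\prod_(i <- r) F i) (\prod_(i <- r) G i).
Proof. by move=> h; rewrite big_seq [X in assoc _ X]big_seq; apply: assoc_prod. Qed.

Lemma Np : (1 < p ^ n)%N.
Proof. by rewrite -{1}(expn0 p) ltn_exp2l ?prime_gt1. Qed.

Lemma zN : zeta ^+ (p ^ n) = 1.
Proof. by apply/eqP; rewrite prim_expr_order. Qed.

Lemma assoc_unit x a : assoc (zeta ^+ a * x) x.
Proof.
apply: (mk_assoc (U:=zeta ^+ a) (V:=zeta ^+ ((p ^ n) - a %% (p ^ n)))); try exact: (T_zexp pr).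
  by rewrite mulrC.
rewrite -mulrA mulrCA -(prim_expr_mod prim a) -exprD subnKC ?zN ?mulr1 //.
by rewrite ltnW // ltn_mod; case: (p ^ n)%N Np.
Qed.

Lemma assoc_neg x : assoc (- x) x.
Proof.
have Tm : T (-1) by apply: (T_opp pr); exact: (T1 pr).
by apply: (mk_assoc Tm Tm); ring.
Qed.

Lemma assoc_pow c M u : (0 < M)%N -> M.-primitive_root (zeta ^+ c) -> coprime u M ->
  assoc (1 - (zeta ^+ c) ^+ u) (1 - zeta ^+ c).
Proof.
move=> M0 pz cu; set z := zeta ^+ c.
have Tz k : T (z ^+ k) by rewrite /z -exprM; apply: (T_zexp pr).
have geo w k : 1 - w ^+ k = (1 - w) * \sum_(i < k) w ^+ i.
  by rewrite -opprB subrX1 -mulNr opprB.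
have pz' : M.-primitive_root (z ^+ u) by rewrite prim_root_exp_coprime.
have [i hi] := prim_rootP pz' (prim_expr_order pz).
apply: (mk_assoc (U:=\sum_(i < u) z ^+ i) (V:=\sum_(j < i) (z ^+ u) ^+ j)).
- by apply: (T_sum pr) => k _; apply: Tz.
- by apply: (T_sum pr) => k _; rewrite -exprM; apply: Tz.
- exact: geo.
by rewrite -/z in hi; rewrite {1}hi geo.
Qed.

Lemma cop_pn c k : (0 < k)%N -> ~~ (p %| c)%N -> coprime c (p ^ k).
Proof. by move=> k0 h; rewrite coprime_pexpr // coprime_sym prime_coprime. Qed.

Lemma assoc_unit_t c : ~~ (p %| c)%N -> assoc (1 - zeta ^+ c) t.
Proof.
move=> h.
have M0 : (0 < p ^ n)%N by case: (p ^ n)%N Np.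
have pz : (p ^ n)%N.-primitive_root (zeta ^+ 1) by rewrite expr1.
by have := assoc_pow M0 pz (cop_pn n1 h); rewrite !expr1.
Qed.

Lemma prim_sub e : (e <= n)%N -> (p ^ e)%N.-primitive_root (zeta ^+ (p ^ (n - e))).
Proof.
move=> en; have := exp_prim_root prim (p ^ (n - e)).
have hd : (p ^ (n - e) %| p ^ n)%N by rewrite dvdn_exp2l // leq_subr.
rewrite (gcdn_idPl hd).
have -> : (p ^ n = p ^ e * p ^ (n - e))%N by rewrite -expnD subnKC.
by rewrite mulnK // expn_gt0 prime_gt0.
Qed.

Lemma assoc_ppow e : (e < n)%N -> assoc (1 - zeta ^+ (p ^ e)) (t ^+ (p ^ e)).
Proof.
move=> en; set N := (p ^ e)%N; set M := (p ^ (n - e))%N.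
have pw := prim_sub (ltnW en); rewrite -/N -/M in pw.
have := factor_Xn_sub_1 pw => /(congr1 (fun q => q.[zeta])).
rewrite horner_prod !hornerE => hP0.
have hP : \prod_(0 <= i < N) (zeta - (zeta ^+ M) ^+ i) = zeta ^+ N - 1.
  by rewrite -hP0; apply: eq_bigr => i _; rewrite hornerXsubC.
have ci i : zeta - (zeta ^+ M) ^+ i = zeta * (1 - zeta ^+ ((p ^ n).-1 + i * M)).
  rewrite mulrBr mulr1 -exprS -addSn prednK; last by case: (p ^ n)%N Np.
  by rewrite exprD zN mul1r mulnC exprM.
have hpM : (p %| M)%N by rewrite /M dvdn_exp // subn_gt0.
have cip i : ~~ (p %| (p ^ n).-1 + i * M)%N.
  apply/negP => hd.
  have : (p %| ((p ^ n).-1 + i * M).+1)%N.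
    rewrite -addSn prednK; last by case: (p ^ n)%N Np.
    by rewrite dvdn_add ?dvdn_mull // dvdn_exp.
  by rewrite -addn1 dvdn_addr // dvdn1 => /eqP p1; move: pr; rewrite p1.
have -> : 1 - zeta ^+ N = - (\prod_(0 <= i < N) (zeta - (zeta ^+ M) ^+ i)) by rewrite hP opprB.
apply: assoc_trans (assoc_neg _) _.
have -> : t ^+ N = \prod_(0 <= i < N) t by rewrite prodr_const_nat subn0.
apply: assoc_prod => i _; rewrite ci.
apply: assoc_trans (assoc_unit _ 1) _.
exact: assoc_unit_t.
Qed.

Lemma prim_sub2 e : (e <= n)%N -> (p ^ (n - e))%N.-primitive_root (zeta ^+ (p ^ e)).
Proof. by move=> en; have := prim_sub (leq_subr e n); rewrite subKn. Qed.

Lemma assoc_gen m : (0 < m)%N -> (m < p ^ n)%N ->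
  assoc (1 - zeta ^+ m) (t ^+ (p ^ (logn p m))).
Proof.
move=> m0 mN; have [u cu hm] := pfactor_coprime pr m0.
set e := logn p m in hm *.
have en : (e < n)%N.
  rewrite -(ltn_exp2l _ _ (prime_gt1 pr)); apply: leq_ltn_trans mN.
  have u0 : (0 < u)%N by move: m0; rewrite hm muln_gt0 => /andP[].
  by rewrite hm leq_pmull.
apply: assoc_trans (assoc_ppow en).
rewrite hm mulnC exprM.
apply: (assoc_pow (M := (p ^ (n - e))%N)); first by rewrite expn_gt0 prime_gt0.
  exact: prim_sub2 (ltnW en).
by rewrite coprime_pexpr ?subn_gt0 // coprime_sym.
Qed.

Lemma p_prod (w : algC) : p.-primitive_root w -> p%:R = \prod_(1 <= i < p) (1 - w ^+ i).
Proof.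
move=> pw; have := factor_Xn_sub_1 pw.
rewrite big_ltn ?prime_gt0 // expr0 subrX1 => /mulfI.
rewrite polyXsubC_eq0 => /(_ isT) /(congr1 (fun q => q.[1])).
rewrite horner_prod horner_sum => e.
have -> : p%:R = \sum_(i < p) 'X^i.[1] :> algC.
  by rewrite -[in LHS](card_ord p) -sumr_const; apply: eq_bigr => i _; rewrite hornerXn expr1n.
by rewrite -e; apply: eq_bigr => i _; rewrite hornerXsubC.
Qed.

Lemma t_p : exists V, T V /\ t ^+ (p ^ (n - 1) * p.-1) = p%:R * V.
Proof.
have n1' : (n - 1 < n)%N by rewrite ltn_subrL n1.
have pw := prim_sub2 (ltnW n1'); rewrite subKn // expn1 in pw.
have : assoc p%:R (t ^+ (p ^ (n - 1) * p.-1)).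
  rewrite (p_prod pw) exprM -(subn1 p) -prodr_const_nat.
  apply: assoc_prod_seq => i; rewrite mem_index_iota => /andP [] i1 ip.
  apply: assoc_trans (assoc_ppow n1').
  apply: (assoc_pow (M := p)) => //; first exact: prime_gt0.
  by rewrite coprime_sym prime_coprime // gtnNdvd.
by move=> [U [V [_ [hV [_ e]]]]]; exists V.
Qed.

Lemma t_noninv y : T y -> t * y != 1.
Proof.
move=> hy; apply/negP => /eqP ty.
have [V [hV eV]] := t_p; set K := (p ^ (n - 1) * p.-1)%N in eV.
have p0 : p%:R != 0 :> algC by rewrite pnatr_eq0 -lt0n prime_gt0.
have e1 : p%:R^-1 = V * y ^+ K.
  have : 1 = p%:R * (V * y ^+ K) by rewrite mulrA -eV -exprMn ty expr1n.
  by move=> h; apply: (mulfI p0); rewrite mulfV.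
have Tp : T p%:R^-1 by rewrite e1; apply: (T_mul pr) => //; apply: (T_exp pr).
have za : zeta \in Aint by apply: Aint_prim_root prim.
have [d [hd hA]] := SS_T pr za Tp.
have hQ : d%:R * p%:R^-1 \in Crat by rewrite rpred_div ?rpred_nat.
have /intrP [m em] := Cint_rat_Aint hQ hA.
have : d%:R = (p%:Z * m)%:~R :> algC.
  by rewrite rmorphM /= -em pmulrn mulrCA divff ?mulr1.
have -> : d%:R = (d%:Z)%:~R :> algC by rewrite pmulrn.
move=> /intr_inj /(congr1 absz) /=; rewrite abszM /= => ed.
by move: hd; rewrite ed dvdn_mulr.
Qed.

Lemma zeta1 : zeta != 1.
Proof.
have := eq_prim_root_expr prim 1 0; rewrite expr1 expr0 => ->.
by rewrite modn_small ?Np // mod0n.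
Qed.

Lemma t0 : t != 0. Proof. by rewrite subr_eq0 eq_sym zeta1. Qed.

Lemma vt_assoc x k : assoc x (t ^+ k) -> v_t p zeta x = k.
Proof.
move=> [U [V [hU [hV [e1 e2]]]]].
have Tt : T t by apply: (T_sub pr); [apply: (T1 pr) | apply: (T_z pr)].
have nd : forall j, (k < j)%N -> ~ dvd_T p zeta (t ^+ j) x.
  move=> j kj [y [hy ey]].
  have : t ^+ k * (t * (t ^+ (j - k.+1) * y * V)) = t ^+ k * 1.
    by rewrite mulr1 {2}e2 ey !mulrA -exprSr -exprD subnKC.
  move/mulfI; rewrite expf_neq0 ?t0 // => /(_ isT) /eqP.
  apply/negP/t_noninv; apply: (T_mul pr) => //; apply: (T_mul pr) => //; exact: (T_exp pr).
have Pk : dvd_T p zeta (t ^+ k) x /\ ~ dvd_T p zeta (t ^+ k.+1) x.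
  by split; [exists U | apply: nd].
rewrite /v_t; set P := (fun k => _ /\ _).
have := epsilon_spec (inhabits 0%N) P (ex_intro _ k Pk).
set k' := epsilon _ _ => -[hd hn].
have [lt|gt|//] := ltngtP k' k.
  case: hn; exists (t ^+ (k - k'.+1) * U); split.
    by apply: (T_mul pr) => //; apply: (T_exp pr).
  by rewrite e1 mulrA -exprD subnKC.
by case: (nd _ gt).
Qed.
End Main.

Local Close Scope ring_scope.

Section Cnt.
Variables (M r : nat).
Hypotheses (M0 : 0 < M) (rM : r < M).

Lemma cnt_blk a rr : rr <= M -> count (fun y => y %% M == r) (iota (a * M) rr) = (r < rr).
Proof.
move=> rrM; rewrite -(addn0 (a * M)) iotaDl count_map.
rewrite (@eq_in_count _ _ (pred1 r)); last first.
  move=> i; rewrite mem_iota add0n => irr /=.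
  by rewrite modnMDl modn_small // (leq_trans irr).
by rewrite count_uniq_mem ?iota_uniq // mem_iota.
Qed.

Lemma cnt_full q rr : rr <= M -> count (fun y => y %% M == r) (iota 0 (q * M + rr)) = q + (r < rr).
Proof.
move=> rrM; rewrite iotaD count_cat add0n cnt_blk //; congr (_ + _).
elim: q => [|q ih]; first by rewrite mul0n.
by rewrite mulSnr iotaD count_cat ih add0n cnt_blk // rM addn1.
Qed.

Lemma cnt_lower N : N %/ M <= count (fun y => y %% M == r) (iota 0 N).
Proof.
have h := cnt_full (N %/ M) (ltnW (ltn_pmod N M0)).
by rewrite -divn_eq in h; rewrite h leq_addr.
Qed.
End Cnt.

Lemma cnt_upper M N : 0 < M -> count (fun y => y %% M == N %% M) (iota 0 N) = N %/ M.
Proof.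
move=> M0; have h := @cnt_full M (N %% M) (ltn_pmod N M0) (N %/ M) _ (ltnW (ltn_pmod N M0)).
by rewrite -divn_eq ltnn addn0 in h.
Qed.

Definition cc p s := if s is s'.+1 then p ^ s - p ^ s' else 1.

Lemma cc_tele p L : 0 < p -> \sum_(s < L.+1) cc p s = p ^ L.
Proof.
move=> p0; elim: L => [|L ih]; first by rewrite big_ord1.
rewrite big_ord_recr /= ih subnKC // leq_pexp2l //.
Qed.

Lemma decomp p d B : prime p -> 0 < d -> logn p d < B ->
  p ^ logn p d = \sum_(s < B) cc p s * (p ^ s %| d).
Proof.
move=> pr d0 LB; rewrite -cc_tele ?prime_gt0 // (big_ord_widen _ _ LB) big_mkcond /=.
apply: eq_bigr => s _; rewrite pfactor_dvdn // ltnS.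
by case: (s <= logn p d); rewrite ?muln1 ?muln0.
Qed.

Lemma sumb (T : Type) (s : seq T) (P : pred T) : \sum_(y <- s) (P y : nat) = count P s.
Proof. by elim: s => [|a s ih]; rewrite ?big_nil ?big_cons ?ih. Qed.

Lemma comb p x z : prime p -> x < z -> ~~ (p %| x) -> ~~ (p %| z) ->
  \sum_(y <- [seq y <- iota 0 x | ~~ (p %| y)]) p ^ logn p (x - y) <=
  \sum_(y <- [seq y <- iota 0 x | ~~ (p %| y)]) p ^ logn p (z - y).
Proof.
move=> pr xz px pz; set U := [seq y <- iota 0 x | _].
have lB d : 0 < d -> d <= z -> logn p d < z.+1.
  move=> d0 dz; apply: leq_trans (ltn_expl _ (prime_gt1 pr)) _.
  by rewrite (leq_trans _ (leqW dz)) // dvdn_leq // pfactor_dvdnn.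
have memU y : y \in U -> y < x by rewrite mem_filter mem_iota => /andP [] _.
rewrite (eq_big_seq (fun y => \sum_(s < z.+1) cc p s * (p ^ s %| x - y))); last first.
  move=> y /memU yx; apply: decomp => //; first by rewrite subn_gt0.
  by apply: lB; rewrite ?subn_gt0 // (leq_trans (leq_subr _ _)) // ltnW.
rewrite [X in _ <= X](eq_big_seq (fun y => \sum_(s < z.+1) cc p s * (p ^ s %| z - y))); last first.
  move=> y /memU yx; apply: decomp => //; first by rewrite subn_gt0 (ltn_trans yx).
  by apply: lB; rewrite ?subn_gt0 ?(ltn_trans yx) // leq_subr.
rewrite exchange_big [X in _ <= X]exchange_big /=.
apply: leq_sum => s _; rewrite -!big_distrr /= !sumb leq_mul2l; apply/orP; right.
case: s => [[|s] _] /=.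
  by rewrite expn0; apply: sub_count => y _; rewrite dvd1n.
set M := p ^ s.+1.
have M0 : 0 < M by rewrite expn_gt0 prime_gt0.
rewrite /U !count_filter.
apply: (@leq_trans (x %/ M)).
  rewrite -(cnt_upper x M0).
  apply: (@leq_trans (count (fun y => M %| x - y) (iota 0 x))).
    by apply: sub_count => y /andP [].
  rewrite leq_eqVlt; apply/orP; left; apply/eqP; apply: eq_in_count => y.
  rewrite mem_iota add0n => /andP [_ yx] /=.
  by rewrite eq_sym eqn_mod_dvd // ltnW.
apply: (leq_trans (cnt_lower M0 (ltn_pmod z M0) x)).
rewrite leq_eqVlt; apply/orP; left; apply/eqP; apply: eq_in_count => y.
rewrite mem_iota add0n => /andP [_ yx] /=.
have yz : y <= z by rewrite ltnW // (ltn_trans yx).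
rewrite eq_sym eqn_mod_dvd //.
case hM: (M %| z - y) => //=; apply/esym/negP => hy.
have : p %| z - y by apply: dvdn_trans hM; rewrite dvdn_exp.
move=> hzy; move: pz; rewrite -(subnK yz) dvdn_add //.
Qed.

Local Open Scope ring_scope.

Lemma sum_take (F : nat -> nat) (s : seq nat) j : (j <= size s)%N ->
  (\sum_(i < j) F (nth 0%N s i) = \sum_(y <- take j s) F y)%N.
Proof.
move=> js; rewrite (big_nth 0%N) size_take_min (minn_idPl js) big_mkord.
by apply: eq_bigr => i _; rewrite nth_take.
Qed.

Lemma take_filt (P : pred nat) N j : (j < size [seq y <- iota 0 N | P y])%N ->
  take j [seq y <- iota 0 N | P y] =
  [seq y <- iota 0 (nth 0%N [seq y <- iota 0 N | P y] j) | P y].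
Proof.
set a := [seq y <- _ | _] => ja; set x := nth 0%N a j.
have xa : x \in a by apply: mem_nth.
have [Px xN] : P x /\ (x < N)%N by move: xa; rewrite mem_filter mem_iota add0n => /andP [h1 /andP [_ h2]].
have ua : uniq a by rewrite filter_uniq ?iota_uniq.
have ea : a = [seq y <- iota 0 x | P y] ++ x :: [seq y <- iota x.+1 (N - x).-1 | P y].
  rewrite /a -{1}(subnKC (ltnW xN)) iotaD add0n.
  have -> : (N - x = (N - x).-1.+1)%N by rewrite prednK // subn_gt0.
  by rewrite /= filter_cat /= Px.
have xl : x \notin [seq y <- iota 0 x | P y] by rewrite mem_filter mem_iota add0n ltnn !andbF.
have ij : index x a = j by rewrite /x index_uniq.
have : index x a = size [seq y <- iota 0 x | P y].
  by rewrite {1}ea index_cat (negPf xl) /= eqxx addn0.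
rewrite ij => ->; rewrite {1}ea; exact: take_size_cat.
Qed.

Section Fin.
Variables (p n : nat) (zeta : algC).
Hypothesis pr : prime p.
Hypothesis n1 : (1 <= n)%N.
Hypothesis prim : (p ^ n)%N.-primitive_root zeta.

Lemma vt_diff u w : (u < w)%N -> (w < p ^ n)%N ->
  v_t p zeta ((1 - zeta ^+ w) - (1 - zeta ^+ u)) = (p ^ logn p (w - u))%N.
Proof.
move=> uw wN; apply: (vt_assoc pr n1 prim).
have -> : (1 - zeta ^+ w) - (1 - zeta ^+ u) = zeta ^+ u * (1 - zeta ^+ (w - u)).
  by rewrite mulrBr mulr1 -exprD subnKC ?(ltnW uw) //; ring.
apply: assoc_trans (assoc_unit pr n1 prim _ _) _ => //.
apply: (assoc_gen pr n1 prim); first by rewrite subn_gt0.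
exact: leq_ltn_trans (leq_subr _ _) wN.
Qed.
End Fin.

Theorem lemma2p6 (p n : nat) (zeta : algC) :
  prime p -> (1 <= n)%N -> (p ^ n)%N.-primitive_root zeta ->
  minimally_ordered p zeta (tau p n zeta).
Proof.
move=> pr n1 prim; rewrite /minimally_ordered /tau.
set a := [seq j <- iota 0 (p ^ n) | ~~ (p %| j)%N].
have memA y : y \in a -> (y < p ^ n)%N /\ ~~ (p %| y)%N.
  by rewrite mem_filter mem_iota add0n => /andP [h1 /andP [_ h2]].
have srt : sorted ltn a by apply: sorted_filter; [exact: ltn_trans | exact: iota_ltn_sorted].
split.
- rewrite map_inj_in_uniq ?filter_uniq ?iota_uniq // => u w /memA [uN _] /memA [wN _] /eqP.
  rewrite -subr_eq0 opprB addrC subrKA subr_eq0 eq_sym (eq_prim_root_expr prim).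
  by rewrite !modn_small // => /eqP.
- move=> i; rewrite size_map => ia; rewrite (nth_map 0%N) //.
  apply: (T_sub pr); [exact: (T1 pr) | exact: (T_zexp pr)].
move=> j k jk; rewrite size_map => ka.
have ja : (j < size a)%N by apply: ltn_trans ka.
have lt u w : (u < w)%N -> (w < size a)%N -> (nth 0%N a u < nth 0%N a w)%N.
  move=> uw wa; apply: (sorted_ltn_nth ltn_trans 0%N srt) => //.
  by rewrite inE (ltn_trans uw).
have hN w : (w < size a)%N -> (nth 0%N a w < p ^ n)%N /\ ~~ (p %| nth 0%N a w)%N.
  by move=> wa; apply: memA; apply: mem_nth.
rewrite (eq_bigr (fun i : 'I_j => p ^ logn p (nth 0%N a j - nth 0%N a i)))%N; last first.
  move=> i _; rewrite !(nth_map 0%N) ?(ltn_trans (ltn_ord i)) //.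
  by apply: (vt_diff pr n1 prim); [by apply: lt | case: (hN j ja)].
rewrite [X in (_ <= X)%N](eq_bigr (fun i : 'I_j => p ^ logn p (nth 0%N a k - nth 0%N a i)))%N; last first.
  move=> i _; rewrite !(nth_map 0%N) ?(ltn_trans (ltn_ord i)) ?(ltn_trans jk) //.
  by apply: (vt_diff pr n1 prim); [apply: lt => //; apply: ltn_trans (ltn_ord i) jk | case: (hN k ka)].
rewrite (sum_take (fun y => p ^ logn p (nth 0%N a j - y)))%N ?(ltnW ja) //.
rewrite (sum_take (fun y => p ^ logn p (nth 0%N a k - y)))%N ?(ltnW ja) //.
rewrite /a take_filt -/a //.
apply: comb => //; first exact: lt.
  by case: (hN j ja).
by case: (hN k ka).
Qed.
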